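(* Let $G$ be a hued patch and let $\varphi$ be a 4-coloring (with colors in $\mathbb{Z}_2^2$) of the boundary of the outer face of $G$. If $\varphi$ extends to a 4-coloring of $G$, then $\varphi$ is viable.
   Context: A patch is a connected plane graph all of whose faces, except possibly the outer face, have length three. A hued graph is a graph $G$ with a proper coloring $\psi_G:V(G)\to\mathbb{Z}_3$ (hue); a dappled graph is a hued graph with additionally a proper coloring $\varphi_G:V(G)\to\mathbb{Z}_2^2$ (color). For a hued graph $H$ and a proper coloring $\theta:V(H)\to\mathbb{Z}_2^2$, $H^\theta$ denotes the dappled graph with color $\theta$. A homomorphism of dappled graphs maps adjacent vertices to adjacent vertices and preserves hue and color. The dappled triangular grid $\mathbf{T}$ has vertex set $\mathbb{Z}^2$, with $(i_1,j_1)$ and $(i_2,j_2)$ adjacent iff $(i_2-i_1,j_2-j_1)\in\{\pm(1,0),\pm(0,1),\pm(1,1)\}$, hue $(i+j)\bmod 3$ and color $(i\bmod 2,j\bmod 2)$ at $(i,j)$. A 4-coloring $\varphi$ of a connected hued graph $C$ is viable if $C^\varphi$ has a homomorphism to $\mathbf{T}$. The boundary of the outer face of $G$ is regarded as a hued graph with the hues inherited from $G$. *)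

(* Defs.v *)
From mathcomp Require Import all_boot all_order all_algebra.
Set Implicit Arguments. Unset Strict Implicit. Unset Printing Implicit Defensive.
Import GRing.Theory.
Local Open Scope ring_scope.
Local Open Scope nat_scope.

Definition simple_graph (V : finType) (adj : rel V) :=
  symmetric adj /\ irreflexive adj.

Definition connected_graph (V : finType) (adj : rel V) :=
  forall u v, connect adj u v.

Definition proper_on (V : finType) (C : eqType) (e : rel V) (c : V -> C) :=
  forall u v, e u v -> c u != c v.

(* rot v is a cyclic permutation of the neighbourhood of v (the cyclic order
   of the edges around v in the embedding); values outside N(v) are junk. *)
Definition rotation_system (V : finType) (adj : rel V) (rot : V -> V -> V) :=
  forall v,
    [/\ forall u, adj v u -> adj v (rot v u),
        forall u w, adj v u -> adj v w -> rot v u = rot v w -> u = w &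
        forall u w, adj v u -> adj v w -> exists k, iter k (rot v) u = w].

Definition darts (V : finType) (adj : rel V) : {set V * V} :=
  [set d | adj d.1 d.2].

Definition fmap (V : finType) (rot : V -> V -> V) (d : V * V) : V * V :=
  (d.2, rot d.2 d.1).

Definition face (V : finType) (rot : V -> V -> V) (d : V * V) : {set V * V} :=
  [set e | fconnect (fmap rot) d e].

Definition faces (V : finType) (adj : rel V) (rot : V -> V -> V)
  : {set {set V * V}} :=
  [set face rot d | d in darts adj].

(* A patch: a connected simple graph with a genus-0 rotation system (Euler's
   formula V - E + F = 2, i.e. a plane embedding), with outer face the face
   containing the dart o, all other faces having length 3.  The one-vertex
   graph (no edges) is also a patch; then o = (x,x) for its unique vertex x. *)
Definition patch (V : finType) (adj : rel V) (rot : V -> V -> V) (o : V * V) :=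
  [/\ simple_graph adj, connected_graph adj, rotation_system adj rot,
      (darts adj = set0 /\ o.1 = o.2) \/
      (adj o.1 o.2 /\ #|V| + #|faces adj rot| = (#|darts adj|)./2 + 2) &
      forall d, adj d.1 d.2 -> d \notin face rot o -> #|face rot d| = 3].

Definition bvert (V : finType) (adj : rel V) (rot : V -> V -> V) (o : V * V)
  : {set V} :=
  o.1 |: [set d.1 | d in [set d in face rot o | adj d.1 d.2]].

Definition bedge (V : finType) (adj : rel V) (rot : V -> V -> V) (o : V * V)
  : rel V :=
  fun u v => adj u v && (((u, v) \in face rot o) || ((v, u) \in face rot o)).

Definition Tadj (p q : int * int) : bool :=
  let a := (q.1 - p.1)%R in let b := (q.2 - p.2)%R in
  [|| (a == 1%R) && (b == 0%R), (a == (-1)%R) && (b == 0%R),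
      (a == 0%R) && (b == 1%R), (a == 0%R) && (b == (-1)%R),
      (a == 1%R) && (b == 1%R) | (a == (-1)%R) && (b == (-1)%R)].

Definition hueT (p : int * int) : 'Z_3 := ((p.1 + p.2)%R)%:~R%R.
Definition colorT (p : int * int) : 'Z_2 * 'Z_2 := (p.1%:~R%R, p.2%:~R%R).

(* viability of the coloring phi of the hued graph (A, e, psi):
   the dappled graph has a homomorphism into T *)
Definition viable (V : finType) (A : {set V}) (e : rel V)
  (psi : V -> 'Z_3) (phi : V -> 'Z_2 * 'Z_2) :=
  exists f : V -> int * int,
    (forall u v, u \in A -> v \in A -> e u v -> Tadj (f u) (f v)) /\
    (forall v, v \in A -> hueT (f v) = psi v /\ colorT (f v) = phi v).

(* Main.v *)
Require Import Defs.
From mathcomp Require Import all_boot all_order all_algebra ring zify.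
Set Implicit Arguments. Unset Strict Implicit.
Import GRing.Theory Num.Theory.

Section Brute.
Local Open Scope ring_scope.
Lemma Z3_cases (x : 'Z_3) : [\/ x = 0, x = 1 | x = 2].
Proof.
case: x => m Hm; case: m Hm => [|[|[|m]]] Hm.
- by constructor 1; apply/val_inj.
- by constructor 2; apply/val_inj.
- by constructor 3; apply/val_inj.
- by [].
Qed.
Lemma Z2_cases (x : 'Z_2) : x = 0 \/ x = 1.
Proof.
case: x => m Hm; case: m Hm => [|[|m]] Hm.
- by left; apply/val_inj.
- by right; apply/val_inj.
- by [].
Qed.
Lemma Z22_cases (c : 'Z_2 * 'Z_2) : [\/ c = (0,0), c = (1,0), c = (0,1) | c = (1,1)].
Proof.
case: c => a b; case: (Z2_cases a) => ->; case: (Z2_cases b) => ->;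
[constructor 1|constructor 3|constructor 2|constructor 4]; done.
Qed.

Definition Dl (h : 'Z_3) (c : 'Z_2 * 'Z_2) : int * int :=
  if h == 1 then
    (if c == (1,0) then (1,0) else if c == (0,1) then (0,1) else (-1,-1))
  else
    (if c == (1,0) then (-1,0) else if c == (0,1) then (0,-1) else (1,1)).

Ltac brute h c := case: (Z3_cases h) => ->; case: (Z22_cases c) => ->; vm_compute; reflexivity.

Lemma Dl_anti_b (h : 'Z_3) (c : 'Z_2 * 'Z_2) : (h != 0) ==> (c != 0) ==>
  (Dl (- h) (- c) == (- (Dl h c).1, - (Dl h c).2)).
Proof. brute h c. Qed.

Lemma Dl_hue_b (h : 'Z_3) (c : 'Z_2 * 'Z_2) : (h != 0) ==> (c != 0) ==>
  (((Dl h c).1 + (Dl h c).2)%:~R == h).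
Proof. brute h c. Qed.

Lemma Dl_col_b (h : 'Z_3) (c : 'Z_2 * 'Z_2) : (h != 0) ==> (c != 0) ==>
  ((((Dl h c).1)%:~R, ((Dl h c).2)%:~R) == c).
Proof. brute h c. Qed.

Lemma Dl_adj_b (h : 'Z_3) (c : 'Z_2 * 'Z_2) : (h != 0) ==> (c != 0) ==>
  Tadj (0,0) (Dl h c).
Proof. brute h c. Qed.

Lemma start_b (h : 'Z_3) (c : 'Z_2 * 'Z_2) : exists z, (hueT z == h) && (colorT z == c).
Proof.
case: (Z3_cases h) => ->; case: (Z22_cases c) => ->;
[exists (0,0)|exists (3,0)|exists (0,3)|exists (1,5)
|exists (4,0)|exists (1,0)|exists (0,1)|exists (3,1)
|exists (2,0)|exists (5,0)|exists (4,1)|exists (1,1)]; vm_compute; reflexivity.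
Qed.

Lemma Dl_tri (x y : 'Z_3) (c d : 'Z_2 * 'Z_2) :
  x != 0 -> y != 0 -> x + y != 0 -> c != 0 -> d != 0 -> c + d != 0 ->
  ((Dl x c).1 + (Dl y d).1 + (Dl (- (x + y)) (- (c + d))).1 = 0)
  /\ ((Dl x c).2 + (Dl y d).2 + (Dl (- (x + y)) (- (c + d))).2 = 0).
Proof.
case: (Z3_cases x) => ->; case: (Z3_cases y) => ->;
case: (Z22_cases c) => ->; case: (Z22_cases d) => ->; vm_compute; try discriminate; by [].
Qed.

End Brute.

Section G.
Variables (V : finType) (adj : rel V) (rot : V -> V -> V).
Hypothesis sym : symmetric adj.
Hypothesis irr : irreflexive adj.
Hypothesis rs : rotation_system adj rot.

Definition dartp : pred (V * V) := fun d => adj d.1 d.2.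

Lemma rot_adj v u : adj v u -> adj v (rot v u).
Proof. by case: (rs v) => H _ _; apply: H. Qed.

Lemma f_in : {homo fmap rot : x / x \in dartp}.
Proof.
move=> [u v]; rewrite /in_mem /= /dartp /fmap /= => h.
by apply: rot_adj; rewrite sym.
Qed.

Lemma f_inj : {in dartp &, injective (fmap rot)}.
Proof.
move=> [u v] [u2 v2]; rewrite /in_mem /= /dartp /fmap /= => h h2 [e1 e2].
subst v2; case: (rs v) => _ inj _.
by rewrite (inj u u2) // sym.
Qed.

Lemma face_fcon d e : (e \in face rot d) = fconnect (fmap rot) d e.
Proof. by rewrite inE. Qed.

Lemma face_dart d e : d \in dartp -> e \in face rot d -> e \in dartp.
Proof.
move=> hd; rewrite face_fcon => /iter_findex <-.
by elim: (findex _ _ _) => //= n IH; apply: f_in.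
Qed.

Lemma face_eq d e : d \in dartp -> e \in face rot d -> face rot e = face rot d.
Proof.
move=> hd he; have he2 := face_dart hd he.
move: he; rewrite face_fcon => he.
apply/setP => x; rewrite !inE; apply/idP/idP => h.
  exact: connect_trans he h.
by apply: connect_trans h; rewrite (fconnect_sym_in f_in f_inj).
Qed.

Lemma face_fmap d : d \in dartp -> face rot (fmap rot d) = face rot d.
Proof. by move=> hd; apply: face_eq => //; rewrite face_fcon fconnect1. Qed.

Lemma face_tri d : d \in dartp -> #|face rot d| = 3 ->
  [/\ fmap rot (fmap rot (fmap rot d)) = d,
      forall (R : nmodType) (F : V * V -> R),
        (\sum_(x in face rot d) F x = F d + F (fmap rot d) + F (fmap rot (fmap rot d)))%R
    & forall x, x \in face rot d -> x = d \/ x = fmap rot d \/ x = fmap rot (fmap rot d)].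
Proof.
move=> hd hc.
have ho : order (fmap rot) d = 3.
  by rewrite -hc /order; apply: eq_card => x; rewrite face_fcon.
have hor : orbit (fmap rot) d = [:: d; fmap rot d; fmap rot (fmap rot d)].
  by rewrite /orbit ho.
split.
- by have := iter_order_in f_in f_inj hd; rewrite ho.
- move=> R F.
  rewrite (eq_bigl (fun x => x \in orbit (fmap rot) d)); last first.
    by move=> x; rewrite face_fcon fconnect_orbit.
  rewrite -big_uniq ?orbit_uniq // hor !big_cons big_nil.
  by rewrite /= GRing.addr0 GRing.addrA.
- move=> x; rewrite face_fcon fconnect_orbit hor !inE.
  by case/or3P => /eqP ->; auto.
Qed.

End G.

Section LAS.
Local Open Scope ring_scope.

Section LA.
Variables (V : finType) (adj : rel V) (rot : V -> V -> V) (o : V * V).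
Hypothesis sym : symmetric adj.
Hypothesis irr : irreflexive adj.
Hypothesis rs : rotation_system adj rot.

Definition drev (d : V * V) := (d.2, d.1).
Definition Ep : pred (V * V) :=
  fun d => adj d.1 d.2 && (enum_rank d.1 < enum_rank d.2)%N.

Lemma drev_inj : injective drev.
Proof. by move=> [a b] [c d] [-> ->]. Qed.

Lemma dart_split x : adj x.1 x.2 -> (Ep x || Ep (drev x)) && ~~ (Ep x && Ep (drev x)).
Proof.
move=> hx; rewrite /Ep /drev /= hx sym hx /=.
have hne : enum_rank x.1 != enum_rank x.2.
  by rewrite (inj_eq enum_rank_inj); apply: contraTneq hx => ->; rewrite irr.
by case: ltngtP hne => //= /val_inj ->; rewrite eqxx.
Qed.

Lemma sumE (G : V * V -> rat) :
  \sum_(x in Ep) (G x + G (drev x)) = \sum_(x in dartp adj) G x.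
Proof.
rewrite big_split /=.
have -> : \sum_(x in Ep) G (drev x) = \sum_(x | Ep (drev x)) G x.
  rewrite [RHS](reindex_inj drev_inj) /=.
  by apply: eq_big => [[a b]|[a b]].
rewrite (bigID Ep (dartp adj)) /=; congr (_ + _).
  apply: eq_bigl => x; rewrite /dartp /in_mem /=.
  by case: (boolP (adj x.1 x.2)) => h //=; rewrite /Ep; case: (adj x.1 x.2) h.
apply: eq_bigl => x; rewrite /in_mem /=.

rewrite /dartp.
case: (boolP (adj x.1 x.2)) => h /=.
  by have := dart_split h; case: (Ep x); case: (Ep (drev x)).
by rewrite /Ep /drev /= sym (negbTE h).
Qed.

Lemma card_darts : #|dartp adj| = (2 * #|Ep|)%N.
Proof.
have := sumE (fun _ => 1); rewrite !sumr_const => /eqP.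
rewrite mulrnDl -natrD eqr_nat => /eqP <-.
by rewrite addnn mul2n.
Qed.


Hypothesis conn : connected_graph adj.
Hypothesis od : adj o.1 o.2.
Hypothesis euler : (#|V| + #|faces adj rot| = (#|darts adj|)./2 + 2)%N.
Hypothesis tri : forall d, adj d.1 d.2 -> d \notin face rot o -> #|face rot d| = 3.

Definition Fin := faces adj rot :\ face rot o.

Definition M0 : 'M[rat]_(#|V|, #|Ep|) :=
  \matrix_(i < #|V|, j < #|Ep|) ((enum_val i == (enum_val j).2)%:R - (enum_val i == (enum_val j).1)%:R).

Definition M1 : 'M[rat]_(#|Ep|, #|Fin|) :=
  \matrix_(i < #|Ep|, k < #|Fin|) ((enum_val i \in (enum_val k : {set V * V}))%:R - (drev (enum_val i) \in (enum_val k : {set V * V}))%:R).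

Lemma sum_delta (r : 'rV[rat]_#|V|) (w : V) :
  \sum_i r 0 i * (enum_val i == w)%:R = r 0 (enum_rank w).
Proof.
rewrite (bigD1 (enum_rank w)) //= enum_rankK eqxx mulr1 big1 ?addr0 // => i hi.
rewrite (_ : (enum_val i == w) = false) ?mulr0 //; apply/negbTE.
by apply: contra hi => /eqP <-; rewrite enum_valK.
Qed.

Lemma rowM0 (r : 'rV[rat]_#|V|) j :
  (r *m M0) 0 j = r 0 (enum_rank (enum_val j).2) - r 0 (enum_rank (enum_val j).1).
Proof.
rewrite !mxE; under eq_bigr do rewrite mxE mulrBr.
by rewrite sumrB !sum_delta.
Qed.

Lemma mem_faceE g e : g \in faces adj rot -> adj e.1 e.2 -> (e \in g) = (g == face rot e).
Proof.
case/imsetP => y; rewrite inE => hy ->.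
move=> he0; apply/idP/eqP => [he | ->]; last by rewrite inE connect0.
by rewrite (face_eq sym rs hy he).
Qed.

Lemma Fin_sub (k : 'I_#|Fin|) : enum_val k \in faces adj rot /\ enum_val k != face rot o.
Proof. by have := enum_valP k; rewrite !inE => /andP[-> ->]. Qed.

Lemma Fin_face (k : 'I_#|Fin|) : exists d, [/\ adj d.1 d.2, enum_val k = face rot d & d \notin face rot o].
Proof.
have [hf hne] := Fin_sub k.
move: hf hne; case/imsetP => y; rewrite inE => hy -> hne.
exists y; split => //; apply: contra hne => hyo.
by rewrite (face_eq sym rs od hyo).
Qed.

Lemma M1_sum (F : V * V -> rat) (k : 'I_#|Fin|) :
  (forall x, adj x.1 x.2 -> F (drev x) = - F x) ->
  \sum_j F (enum_val j) * M1 j k = \sum_(x in enum_val k) F x.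
Proof.
move=> hF.
set g := enum_val k.
pose G x := F x * (x \in g)%:R.
transitivity (\sum_(j < #|Ep|) (G (enum_val j) + G (drev (enum_val j)))).
  apply: eq_bigr => j _; rewrite mxE mulrBr /G.
  have hj := enum_valP j; move: hj; rewrite /in_mem /= /Ep => /andP[hj _].
  by rewrite hF // mulNr.
rewrite -(big_enum_val (fun x => G x + G (drev x))) sumE.
rewrite big_mkcond [RHS]big_mkcond; apply: eq_bigr => x _ /=.
rewrite /G; case: (boolP (x \in g)) => hx.
  have [d [hd hg _]] := Fin_face k.
  have hxd : x \in dartp adj by apply: (face_dart sym rs hd); rewrite -hg.
  by rewrite hxd mulr1.
by rewrite mulr0; case: (x \in dartp adj).
Qed.

Lemma tri_sum (k : 'I_#|Fin|) (F : V * V -> rat) :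
  (forall x, adj x.1 x.2 -> F (drev x) = - F x) ->
  exists d, [/\ adj d.1 d.2, fmap rot (fmap rot (fmap rot d)) = d &
   \sum_(x in enum_val k) F x = F d + F (fmap rot d) + F (fmap rot (fmap rot d))].
Proof.
move=> hF; have [d [hd -> hno]] := Fin_face k.
have [h3 hs _] := face_tri sym rs hd (tri hd hno).
by exists d; split => //; rewrite hs.
Qed.

Lemma M0M1 : M0 *m M1 = 0.
Proof.
apply/matrixP => i k; rewrite !mxE.
pose Fv (x : V * V) : rat := (enum_val i == x.2)%:R - (enum_val i == x.1)%:R.
under eq_bigr do rewrite mxE -/(Fv _).
have hF : forall x, adj x.1 x.2 -> Fv (drev x) = - Fv x.
  by move=> x _; rewrite /Fv /drev /= opprB.
rewrite M1_sum //.
have [d [hd h3 ->]] := tri_sum k hF.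
have e3 : (fmap rot (fmap rot d)).2 = d.1 by rewrite -[X in _ = X.1]h3.
rewrite /Fv e3 /=.
ring.
Qed.


Definition eF (h : {set V * V}) : 'rV[rat]_#|Fin| := \row_k ((enum_val k == h)%:R).

Lemma rowM1 e (he : e \in Ep) :
  row (enum_rank_in he e) M1 = eF (face rot e) - eF (face rot (drev e)).
Proof.
apply/rowP => k; rewrite !mxE enum_rankK_in //.
have [hf _] := Fin_sub k.
have hd : adj e.1 e.2 by move: he; rewrite /in_mem /= /Ep => /andP[].
rewrite !mem_faceE //; last by rewrite /drev /= sym.
Qed.

Definition Pd d := (eF (face rot d) <= M1)%MS.

Lemma PQ d : adj d.1 d.2 -> (eF (face rot d) - eF (face rot (drev d)) <= M1)%MS.
Proof.
move=> hd; have := dart_split hd.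
case: (boolP (Ep d)) => hE /=.
  by move=> _; rewrite -(rowM1 hE) row_sub.
rewrite andbT => hE2.
have := row_sub (enum_rank_in hE2 (drev d)) M1; rewrite rowM1.
have -> : drev (drev d) = d by case: d {hd hE hE2}.
move/(scalemx_sub (-1)); by rewrite scaleN1r opprB.
Qed.

Lemma Prev d : adj d.1 d.2 -> Pd d -> Pd (drev d).
Proof.
move=> hd hP; have := addmx_sub hP (scalemx_sub (-1) (PQ hd)).
by rewrite scaleN1r opprB addrC subrK.
Qed.

Lemma Po : Pd o.
Proof.
rewrite /Pd (_ : eF (face rot o) = 0) ?sub0mx //.
apply/rowP => k; rewrite !mxE.
have [_ hne] := Fin_sub k.
by rewrite (negbTE hne).
Qed.

Lemma Prot v u : adj v u -> Pd (v, u) -> Pd (v, rot v u).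
Proof.
move=> hvu hP.
have hr := Prev (d := (v, u)) hvu hP.
have hr' : adj u v by rewrite sym.
have := face_fmap sym rs (d := (u, v)) hr'; rewrite /fmap /= => e.
by rewrite /Pd e.
Qed.

Lemma Piter v u n : adj v u -> Pd (v, u) -> adj v (iter n (rot v) u) /\ Pd (v, iter n (rot v) u).
Proof.
move=> hvu hP; elim: n => [|n [IH1 IH2]] //=.
by split; [apply: (rot_adj rs) | apply: Prot].
Qed.

Lemma Pall v u : adj v u -> Pd (v, u) -> forall w, adj v w -> Pd (v, w).
Proof.
move=> hvu hP w hw.
case: (rs v) => _ _ /(_ u w hvu hw) [n <-].
by case: (Piter n hvu hP).
Qed.

Lemma Pconn v : forall w, adj v w -> Pd (v, w).
Proof.
have hbase : forall w, adj o.1 w -> Pd (o.1, w).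
  by apply: (Pall od); rewrite -surjective_pairing; apply: Po.
have := conn o.1 v; case/connectP => p.
elim: p o.1 hbase => [|y p IH] x hx /=; first by move=> _ ->.
case/andP => hxy hp hl; apply: IH hp hl => w hw.
have hyx : adj y x by rewrite sym.
apply: (Pall hyx) => //.
exact: (Prev (d := (x, y)) hxy (hx y hxy)).
Qed.

Lemma M1_full : row_full M1.
Proof.
rewrite -sub1mx; apply/row_subP => k; rewrite row1.
have [d [hd hk _]] := Fin_face k.
have -> : delta_mx 0 k = eF (face rot d).
  apply/rowP => j; rewrite !mxE -hk eqxx /=.
  by rewrite (inj_eq enum_val_inj).
have := Pconn hd; by case: d {hd hk}.
Qed.


Lemma ker0 (r : 'rV[rat]_#|V|) : r *m M0 = 0 ->
  forall u v, r 0 (enum_rank u) = r 0 (enum_rank v).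
Proof.
move=> hr.
have step : forall x y, adj x y -> r 0 (enum_rank x) = r 0 (enum_rank y).
  move=> x y hxy; have := dart_split (x := (x, y)) hxy.
  case: (boolP (Ep (x, y))) => hE /=.
    move=> _; have := rowM0 r (enum_rank_in hE (x, y)).
    rewrite hr mxE enum_rankK_in //= => /eqP; rewrite eq_sym subr_eq0 => /eqP.
    by [].
  rewrite andbT => hE2.
  have := rowM0 r (enum_rank_in hE2 (y, x)).
  rewrite hr mxE enum_rankK_in //= => /eqP; rewrite eq_sym subr_eq0 => /eqP.
  by [].
move=> u v; have := conn u v; case/connectP => p.
elim: p u => [|y p IH] x /=; first by move=> _ ->.
by case/andP => hxy hp hl; rewrite (step _ _ hxy); apply: IH.
Qed.

Lemma rankM0 : (#|V| - 1 <= \rank M0)%N.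
Proof.
have hk : (kermx M0 <= (const_mx 1 : 'rV[rat]_#|V|))%MS.
  apply/row_subP => i.
  have : row i (kermx M0) *m M0 = 0 by rewrite -row_mul mulmx_ker row0.
  move: (row i (kermx M0)) => r hr.
  have -> : r = r 0 (enum_rank o.1) *: const_mx 1.
    apply/rowP => j; rewrite !mxE mulr1 -[j]enum_valK.
    exact: (ker0 hr).
  by apply: scalemx_sub; exact: submx_refl.
have := mxrankS hk; rewrite mxrank_ker.
have := rank_leq_row (const_mx 1 : 'rV[rat]_#|V|).
have := rank_leq_row M0.
lia.
Qed.

Lemma kerM1_sub : (kermx M1 <= M0)%MS.
Proof.
have hs : (M0 <= kermx M1)%MS by rewrite sub_kermx M0M1.
have hr : \rank (kermx M1) = (#|V| - 1)%N.
  rewrite mxrank_ker (eqP M1_full).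
  have hfo : face rot o \in faces adj rot.
    by apply/imsetP; exists o => //; rewrite inE.
  have hF : #|faces adj rot| = (#|Fin| + 1)%N.
    by rewrite /Fin (cardsD1 (face rot o)) hfo addnC.
  have hD : #|darts adj| = (2 * #|Ep|)%N.
    rewrite -card_darts; apply: eq_card => x; by rewrite inE.
  move: euler; rewrite hF hD mul2n doubleK.
  lia.
case: (mxrank_leqif_sup hs) => h1 <-.
by rewrite eqn_leq h1 hr rankM0.
Qed.

Lemma potential (dl : V * V -> rat) :
  (forall x, adj x.1 x.2 -> dl (drev x) = - dl x) ->
  (forall d, adj d.1 d.2 -> fmap rot (fmap rot (fmap rot d)) = d ->
     dl d + dl (fmap rot d) + dl (fmap rot (fmap rot d)) = 0) ->
  exists p : V -> rat, forall u v, adj u v -> dl (u, v) = p v - p u.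
Proof.
move=> hF htri.
pose w : 'rV[rat]_#|Ep| := \row_j dl (enum_val j).
have hw : w *m M1 = 0.
  apply/rowP => k; rewrite !mxE.
  under eq_bigr do rewrite mxE.
  rewrite M1_sum //.
  have [d [hd h3 ->]] := tri_sum k hF.
  exact: htri.
have : (w <= M0)%MS.
  by apply: submx_trans kerM1_sub; rewrite sub_kermx hw.
case/submxP => q hq.
exists (fun v => q 0 (enum_rank v)) => u v huv.
have := dart_split (x := (u, v)) huv.
case: (boolP (Ep (u, v))) => hE /=.
  move=> _; have := rowM0 q (enum_rank_in hE (u, v)).
  by rewrite -hq mxE enum_rankK_in.
rewrite andbT => hE2.
have := rowM0 q (enum_rank_in hE2 (v, u)).
rewrite -hq mxE enum_rankK_in //= => e.
have := hF (v, u); rewrite /drev /= => ->; last by rewrite sym.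
by rewrite e opprB.
Qed.

End LA.

End LAS.

Local Open Scope ring_scope.

Lemma tri_diff (G : zmodType) (a b c : G) : a - c = - ((b - a) + (c - b)).
Proof. by rewrite [b - a + _]addrC subrKA opprB. Qed.

Lemma hueT_add (p d : int * int) :
  hueT (p.1 + d.1, p.2 + d.2) = hueT p + (d.1 + d.2)%:~R.
Proof. rewrite /hueT /= -intrD; congr (_%:~R); by rewrite addrACA. Qed.

Lemma colorT_add (p d : int * int) :
  colorT (p.1 + d.1, p.2 + d.2) = colorT p + ((d.1)%:~R, (d.2)%:~R).
Proof. by rewrite /colorT /= !intrD. Qed.

Lemma Tadj_diff (p q : int * int) : Tadj p q = Tadj (0, 0) (q.1 - p.1, q.2 - p.2).
Proof. by rewrite /Tadj /= !subr0. Qed.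

Lemma connect_ind (T : finType) (e : rel T) (Q : T -> Prop) (a : T) :
  Q a -> (forall x y, e x y -> Q x -> Q y) -> forall b, connect e a b -> Q b.
Proof.
move=> ha hs b /connectP [p]; elim: p a ha => [|y p IH] x hx /=; first by move=> _ ->.
by case/andP => hxy hp hl; apply: (IH y (hs _ _ hxy hx) hp hl).
Qed.

Unset Implicit Arguments.
Theorem corollary8 (V : finType) (adj : rel V) (rot : V -> V -> V) (o : V * V)
  (psi : V -> 'Z_3) (phi : V -> 'Z_2 * 'Z_2) :
  patch adj rot o ->
  proper_on adj psi ->
  proper_on (bedge adj rot o) phi ->
  (exists theta : V -> 'Z_2 * 'Z_2,
      proper_on adj theta /\ (forall v, v \in bvert adj rot o -> theta v = phi v)) ->
  viable (bvert adj rot o) (bedge adj rot o) psi phi.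
Proof.
case=> [[sym irr] conn rs base inner] hpsi _ [theta [htheta hext]].
case: base => [[hd0 ho] | [od euler]].
  have [z /andP[/eqP h1 /eqP h2]] := start_b (psi o.1) (phi o.1).
  exists (fun _ => z); split.
    move=> u v _ _ /andP[huv _].
    have : (u, v) \in darts adj by rewrite inE.
    by rewrite hd0 inE.
  move=> v; rewrite /bvert !inE => /orP [/eqP -> | ]; first by split.
  case/imsetP => d; rewrite inE => /andP[_ hd] _.
  have : d \in darts adj by rewrite inE.
  by rewrite hd0 inE.
have hpsi0 : forall x, adj x.1 x.2 -> psi x.2 - psi x.1 != 0.
  by move=> x hx; rewrite subr_eq0 eq_sym; apply: hpsi.
have hth0 : forall x, adj x.1 x.2 -> theta x.2 - theta x.1 != 0.
  by move=> x hx; rewrite subr_eq0 eq_sym; apply: htheta.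
pose DD (x : V * V) := Dl (psi x.2 - psi x.1) (theta x.2 - theta x.1).
have hanti : forall x, adj x.1 x.2 -> DD (drev x) = (- (DD x).1, - (DD x).2).
  move=> x hx; rewrite /DD /drev /= -(opprB (psi x.2)) -(opprB (theta x.2)).
  by apply/eqP; have := Dl_anti_b (psi x.2 - psi x.1) (theta x.2 - theta x.1);
     rewrite hpsi0 // hth0.
have htri3 : forall d, adj d.1 d.2 -> fmap rot (fmap rot (fmap rot d)) = d ->
   ((DD d).1 + (DD (fmap rot d)).1 + (DD (fmap rot (fmap rot d))).1 = 0) /\
   ((DD d).2 + (DD (fmap rot d)).2 + (DD (fmap rot (fmap rot d))).2 = 0).
  move=> d hd h3.
  have e3 : (fmap rot (fmap rot d)).2 = d.1 by rewrite -[X in _ = X.1]h3.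
  have hd1 : adj (fmap rot d).1 (fmap rot d).2 by apply: (f_in sym rs).
  have hd2 : adj (fmap rot (fmap rot d)).1 (fmap rot (fmap rot d)).2.
    by apply: (f_in sym rs); apply: (f_in sym rs).
  rewrite /DD e3.
  rewrite (tri_diff (psi d.1) (psi d.2) (psi (fmap rot d).2)).
  rewrite (tri_diff (theta d.1) (theta d.2) (theta (fmap rot d).2)).
  have e1 : (fmap rot d).1 = d.2 by [].
  have e2 : (fmap rot (fmap rot d)).1 = (fmap rot d).2 by [].
  apply: Dl_tri.
  - exact: hpsi0.
  - by have := hpsi0 _ hd1; rewrite e1.
  - rewrite [_ + _]addrC subrKA; have := hpsi0 _ hd2; rewrite e2 e3.
    by rewrite -(opprB (psi d.1)) oppr_eq0.
  - exact: hth0.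
  - by have := hth0 _ hd1; rewrite e1.
  - rewrite [_ + _]addrC subrKA; have := hth0 _ hd2; rewrite e2 e3.
    by rewrite -(opprB (theta d.1)) oppr_eq0.
have [p1 hp1] : exists p : V -> rat, forall u v, adj u v -> ((DD (u, v)).1)%:~R = p v - p u.
  apply: (potential (dl := fun x => (((DD x).1)%:~R : rat)) sym irr rs conn od euler inner).
  - by move=> x hx; rewrite hanti //= intrN.
  - move=> d hd h3; rewrite -!intrD; have [-> _] := htri3 d hd h3; by [].
have [p2 hp2] : exists p : V -> rat, forall u v, adj u v -> ((DD (u, v)).2)%:~R = p v - p u.
  apply: (potential (dl := fun x => (((DD x).2)%:~R : rat)) sym irr rs conn od euler inner).
  - by move=> x hx; rewrite hanti //= intrN.
  - move=> d hd h3; rewrite -!intrD; have [_ ->] := htri3 d hd h3; by [].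
have [z0 /andP[/eqP hz1 /eqP hz2]] := start_b (psi o.1) (theta o.1).
pose Inv v := exists z : int * int,
    [/\ p1 v - p1 o.1 = (z.1)%:~R, p2 v - p2 o.1 = (z.2)%:~R,
        hueT (z0.1 + z.1, z0.2 + z.2) = psi v & colorT (z0.1 + z.1, z0.2 + z.2) = theta v].
have claim : forall v, Inv v.
  move=> v; apply: (connect_ind (a := o.1)) => //.
    by exists (0, 0); rewrite /= !subrr !addr0 -surjective_pairing hz1 hz2.
  move=> x y hxy [z [e1 e2 e3 e4]].
  exists (z.1 + (DD (x, y)).1, z.2 + (DD (x, y)).2); split.
  - by rewrite intrD -e1 (hp1 _ _ hxy) [RHS]addrC subrKA.
  - by rewrite intrD -e2 (hp2 _ _ hxy) [RHS]addrC subrKA.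
  - rewrite /= !addrA (hueT_add (z0.1 + z.1, z0.2 + z.2) (DD (x, y))) e3.
    have := Dl_hue_b (psi y - psi x) (theta y - theta x).
    by rewrite (hpsi0 (x, y) hxy) (hth0 (x, y) hxy) /= => /eqP ->; rewrite addrC subrK.
  - rewrite /= !addrA (colorT_add (z0.1 + z.1, z0.2 + z.2) (DD (x, y))) e4.
    have := Dl_col_b (psi y - psi x) (theta y - theta x).
    by rewrite (hpsi0 (x, y) hxy) (hth0 (x, y) hxy) /= => /eqP ->; rewrite addrC subrK.
pose g v : int * int := (z0.1 + numq (p1 v - p1 o.1), z0.2 + numq (p2 v - p2 o.1)).
have hg : forall v, exists z : int * int,
    [/\ g v = (z0.1 + z.1, z0.2 + z.2), p1 v - p1 o.1 = (z.1)%:~R, p2 v - p2 o.1 = (z.2)%:~R,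
        hueT (g v) = psi v & colorT (g v) = theta v].
  move=> v; have [z [e1 e2 e3 e4]] := claim v.
  have eg : g v = (z0.1 + z.1, z0.2 + z.2) by rewrite /g e1 e2 !numq_int.
  by exists z; split; rewrite ?eg.
exists g; split.
  move=> u v _ _ /andP[huv _].
  have [zu [gu eu1 eu2 _ _]] := hg u.
  have [zv [gv ev1 ev2 _ _]] := hg v.
  have hd1 : zv.1 - zu.1 = (DD (u, v)).1.
    apply: (@intr_inj rat); rewrite intrB -ev1 -eu1 (hp1 _ _ huv).
    by rewrite opprB subrKA.
  have hd2 : zv.2 - zu.2 = (DD (u, v)).2.
    apply: (@intr_inj rat); rewrite intrB -ev2 -eu2 (hp2 _ _ huv).
    by rewrite opprB subrKA.
  rewrite Tadj_diff gu gv /= [z0.1 + zv.1]addrC [z0.2 + zv.2]addrC !addrKA hd1 hd2.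
  have := Dl_adj_b (psi v - psi u) (theta v - theta u).
  by rewrite (hpsi0 (u, v) huv) (hth0 (u, v) huv) /= -surjective_pairing.
move=> v hv; have [z [_ _ _ hh hc]] := hg v.
by rewrite hh hc hext.
Qed.
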